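(* Let $d$ be an integer with $1\le d\le q$. Then $$e_1(d,m)>e_2(d,m)>\dots>e_{\binom{m+d}{d}}(d,m)=0.$$
   Context: $q$ is a prime power, $\mathbb{F}_q$ the finite field with $q$ elements, $m$ a positive integer. $e_r(d,m)$ is the maximum, over all families of $r$ linearly independent homogeneous polynomials of degree $d$ in $\mathbb{F}_q[x_0,\dots,x_m]$, of the number of points of $\mathbb{P}^m(\mathbb{F}_q)$ at which all of them vanish. *)

(* Defs.v *)
From HB Require Import structures.
From mathcomp Require Import all_boot all_order all_algebra all_field.
From mathcomp Require Import mpoly.
From Stdlib Require Import ClassicalEpsilon.
Set Implicit Arguments. Unset Strict Implicit. Unset Printing Implicit Defensive.
Import Order.TTheory GRing.Theory.
Local Open Scope ring_scope.

Definition pbool (P : Prop) : bool :=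
  if excluded_middle_informative P then true else false.

(* Points of P^m(F): canonical representatives of the lines of F^(m+1),
   i.e. nonzero vectors whose first nonzero coordinate equals 1. *)
Definition proj_normalized (F : finFieldType) (m : nat)
    (x : {ffun 'I_m.+1 -> F}) : bool :=
  [exists i : 'I_m.+1,
     (x i == 1) && [forall j : 'I_m.+1, (j < i)%N ==> (x j == 0)]].

Definition homog_family (F : finFieldType) (m d r : nat)
    (f : 'I_r -> {mpoly F[m.+1]}) : Prop :=
  forall i, f i \is d.-homog.

Definition lin_indep (F : finFieldType) (m r : nat)
    (f : 'I_r -> {mpoly F[m.+1]}) : Prop :=
  forall c : 'I_r -> F, \sum_(i < r) c i *: f i = 0 -> forall i, c i = 0.

Definition nb_common_zeros (F : finFieldType) (m r : nat)
    (f : 'I_r -> {mpoly F[m.+1]}) : nat :=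
  #|[set x : {ffun 'I_m.+1 -> F} |
      proj_normalized x && [forall i : 'I_r, (f i).@[x] == 0]]|.

Definition achievable (F : finFieldType) (m d r k : nat) : Prop :=
  exists f : 'I_r -> {mpoly F[m.+1]},
    [/\ homog_family d f, lin_indep f & nb_common_zeros f = k].

(* e_r(d,m): the maximum of the achievable values (all of them are bounded by
   #|F|^(m+1), the number of vectors of F^(m+1)). *)
Definition e_max (F : finFieldType) (r d m : nat) : nat :=
  \max_(k < (#|F| ^ m.+1).+1 | pbool (achievable F m d r k)) k.

(* Main.v *)
Require Import Defs.
From HB Require Import structures.
From mathcomp Require Import all_boot all_order all_algebra all_field.
From mathcomp Require Import mpoly.
From Stdlib Require Import ClassicalEpsilon.
Set Implicit Arguments. Unset Strict Implicit. Unset Printing Implicit Defensive.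
Import Order.TTheory GRing.Theory.
Local Open Scope ring_scope.

Section Claim.
Variable F : finFieldType.
Local Notation q := #|F|.

Definition mdrop n (m : 'X_{1..n.+1}) : 'X_{1..n} :=
  [multinom m (widen_ord (leqnSn n) i) | i < n].

Definition slice n (p : {mpoly F[n.+1]}) (k : nat) : {mpoly F[n]} :=
  \sum_(m <- msupp p) (if m ord_max == k then p@_m *: 'X_[mdrop m] else 0).

Lemma slice_coeff n (p : {mpoly F[n.+1]}) k m' :
  (slice p k)@_m' =
  \sum_(m <- msupp p) (if m ord_max == k then p@_m * (mdrop m == m')%:R else 0).
Proof.
rewrite /slice raddf_sum /=; apply: eq_bigr => m _.
by case: ifP => _; rewrite ?mcoeff0 // mcoeffZ mcoeffX.
Qed.

Lemma slice_eval n (p : {mpoly F[n.+1]}) (x : 'I_n.+1 -> F) :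
  (forall m, m \in msupp p -> (m ord_max < q)%N) ->
  p.@[x] = \sum_(k < q) (slice p k).@[fun i => x (widen_ord (leqnSn n) i)]
             * x ord_max ^+ k.
Proof.
move=> hq.
rewrite mevalE.
rewrite /slice.
under [RHS]eq_bigr => k _ do rewrite raddf_sum /= mulr_suml.
rewrite exchange_big /= big_seq [RHS]big_seq; apply: eq_bigr => m hm.
rewrite big_ord_recr /=.
rewrite (bigD1 (Ordinal (hq m hm))) //= eqxx mevalZ mevalX.
rewrite [X in _ = _ + X]big1 ?addr0; last first.
  move=> k hk; case: (m ord_max =P k) => [e|_]; last by rewrite raddf0 mul0r.
  by exfalso; move: hk; apply/negP/negPn/eqP/val_inj; rewrite /= e.
rewrite -mulrA; congr (_ * (_ * _)); apply: eq_bigr => i _; by rewrite mnmE.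
Qed.

Lemma mdrop_inj n (m1 m2 : 'X_{1..n.+1}) :
  m1 ord_max = m2 ord_max -> mdrop m1 = mdrop m2 -> m1 = m2.
Proof.
move=> hmax /mnmP hd; apply/mnmP => i.
have [->//|hi] := eqVneq i ord_max.
have hin : (i < n)%N.
  by rewrite ltn_neqAle -ltnS ltn_ord andbT; move: hi; apply: contra => /eqP h; apply/eqP/val_inj.
have := hd (Ordinal hin); rewrite !mnmE.
by have -> : widen_ord (leqnSn n) (Ordinal hin) = i by apply: val_inj.
Qed.

Definition ext n (y : 'I_n -> F) (t : F) (i : 'I_n.+1) : F :=
  if (insub (val i) : option 'I_n) is Some j then y j else t.

Lemma ext_widen n (y : 'I_n -> F) t i : ext y t (widen_ord (leqnSn n) i) = y i.
Proof.
rewrite /ext; case: insubP => [j _ hj|]; last by rewrite /= ltn_ord.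
by congr y; apply: val_inj; rewrite hj.
Qed.

Lemma ext_max n (y : 'I_n -> F) t : ext y t ord_max = t.
Proof. by rewrite /ext; case: insubP => [j /= |//]; rewrite ltnn. Qed.

Lemma reduced_zero n (p : {mpoly F[n]}) :
  (forall m, m \in msupp p -> forall i, (m i < q)%N) ->
  (forall x : 'I_n -> F, p.@[x] = 0) -> p = 0.
Proof.
elim: n p => [|n IH] p hexp hz.
  have e0 : forall m : 'X_{1..0}, m = 0%MM by move=> m; apply/mnmP => -[].
  have hp : p = (p@_0)%:MP.
    by apply/mpolyP => m; rewrite mcoeffC (e0 m) eqxx mulr1.
  by move: (hz (fun _ => 0)); rewrite hp mevalC => ->.
have hmax m : m \in msupp p -> (m ord_max < q)%N by move=> hm; exact: hexp.
have hslice_exp k m' : m' \in msupp (slice p k) -> forall i, (m' i < q)%N.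
  move=> hm' i; rewrite mcoeff_msupp slice_coeff in hm'.
  case: (boolP (has (fun m => mdrop m == m') (msupp p))) => [/hasP [m hm /eqP e]| hn].
    by rewrite -e mnmE; exact: hexp.
  exfalso; move: hm'; rewrite big_seq big1 ?eqxx //.
  move=> m hm; case: ifP => // _.
  have /negbTE -> : mdrop m != m' by apply: contra hn => h; apply/hasP; exists m.
  by rewrite mulr0.
have hslice0 k : (k < q)%N -> slice p k = 0.
  move=> hk; apply: IH; first exact: hslice_exp.
  move=> y; pose Q := \poly_(k < q) (slice p k).@[y].
  have HQ : Q = 0.
    apply/eqP; apply: contraT => hQ0.
    have hr : all (root Q) (enum F).
      apply/allP => t _; rewrite /root horner_poly.
      apply/eqP; transitivity (p.@[ext y t]); last exact: hz.
      rewrite (slice_eval _ hmax); apply: eq_bigr => j _; rewrite ext_max; congr (_ * _).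
      by apply: meval_eq => i; rewrite ext_widen.
    have := max_poly_roots hQ0 hr (enum_uniq _).
    by rewrite -cardE ltnNge size_poly.
  have : Q`_k = 0 by rewrite HQ coef0.
  by rewrite coef_poly hk.
apply/mpolyP => m; rewrite mcoeff0; apply/eqP; apply: contraT => hm.
rewrite -mcoeff_msupp in hm.
have := congr1 (mcoeff (mdrop m)) (hslice0 _ (hmax m hm)).
rewrite slice_coeff mcoeff0 (bigD1_seq m) ?msupp_uniq //= !eqxx mulr1.
rewrite big1 ?addr0; first by move=> e; move: hm; rewrite mcoeff_msupp e eqxx.
move=> m2 hm2; case: eqP => // e; case: eqP => [e'|]; last by rewrite mulr0.
by exfalso; move/eqP: hm2; apply; apply: mdrop_inj.
Qed.

Lemma eval_Uk n (x : 'I_n -> F) i k : ('X_[U_(i) *+ k]).@[x] = x i ^+ k.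
Proof.
rewrite mevalX (bigD1 i) //= mulmnE mnm1E eqxx mul1n big1 ?mulr1 // => j hj.
by rewrite mulmnE mnm1E eq_sym (negbTE hj) mul0n expr0.
Qed.

Lemma Uk_eq n (i j : 'I_n) k : (0 < k)%N -> (U_(i) *+ k == U_(j) *+ k)%MM = (i == j).
Proof.
move=> hk; apply/eqP/eqP => [/mnmP /(_ i)|-> //].
rewrite !mulmnE !mnm1E eqxx mul1n; case: (j =P i) => // _.
by rewrite mul0n => e; move: hk; rewrite e.
Qed.

Lemma U_eq n (i j : 'I_n) : (U_(i) == U_(j))%MM = (i == j).
Proof.
apply/eqP/eqP => [/mnmP /(_ i)|-> //].
by rewrite !mnm1E eqxx; case: (j =P i).
Qed.

Lemma Uk_neq_U n (i j : 'I_n) k : k != 1%N -> (U_(i) *+ k == U_(j))%MM = false.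
Proof.
move=> hk; apply/negP => /eqP e; have := congr1 mdeg e.
by rewrite mdegMn !mdeg1 mul1n => /eqP; rewrite (negbTE hk).
Qed.

Lemma meval_scale n d (f : {mpoly F[n]}) c (x : 'I_n -> F) :
  f \is d.-homog -> f.@[fun i => c * x i] = c ^+ d * f.@[x].
Proof.
move=> hf; rewrite !mevalE big_distrr /= big_seq [RHS]big_seq.
apply: eq_bigr => m hm.
rewrite (eq_bigr (fun i => c ^+ m i * x i ^+ m i)); last by move=> i _; rewrite exprMn.
rewrite big_split /= prodrXr -mdegE (dhomog_mf hf hm).
by rewrite mulrCA.
Qed.

Lemma homog_nonvanish n d (f : {mpoly F[n]}) :
  f \is d.-homog -> (d <= q)%N -> f != 0 -> exists x : 'I_n -> F, f.@[x] != 0.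
Proof.
move=> hf hdq hf0.
have q1 : (1 < q)%N := finNzRing_gt1 F.
have qn1 : q != 1%N by rewrite gtn_eqF.
have q0 : (0 < q)%N by apply: ltnW.
case: (boolP [exists x : {ffun 'I_n -> F}, f.@[x] != 0]) => [/existsP [x hx]|hall].
  by exists x.
exfalso.
have hz : forall x : 'I_n -> F, f.@[x] = 0.
  move=> x; move: hall; rewrite negb_exists => /forallP /(_ [ffun i => x i]).
  by rewrite negbK => /eqP <-; apply: meval_eq => i; rewrite ffunE.
pose c i := f@_(U_(i) *+ q)%MM.
pose g := f - \sum_(i < n) c i *: ('X_[U_(i) *+ q] - 'X_[U_(i)]).
have gcoef m : g@_m = f@_m - \sum_(i < n) c i * ((U_(i) *+ q == m)%MM%:R - (U_(i) == m)%MM%:R).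
  rewrite /g mcoeffB raddf_sum /=; congr (_ - _); apply: eq_bigr => i _.
  by rewrite mcoeffZ mcoeffB !mcoeffX.
have gz : g = 0.
  apply: reduced_zero; last first.
    move=> x; rewrite /g mevalB hz [X in _ - X]raddf_sum /= big1 ?subrr //.
    move=> i _.
    by rewrite mevalZ mevalB eval_Uk mevalX (bigD1 i) //= mnm1E eqxx expr1 big1 ?mulr1 ?expf_card ?subrr ?mulr0 // => j hj; rewrite mnm1E eq_sym (negbTE hj) expr0.
  move=> m hm j; rewrite ltnNge; apply/negP => hjm.
  move: hm; rewrite mcoeff_msupp gcoef; apply/negP; rewrite negbK.
  have hU i : (U_(i) == m)%MM = false.
    apply/negP => /eqP e; move: hjm; rewrite -e mnm1E.
    by case: (i == j); rewrite leqNgt ?q1 // ltnW.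
  have hUk i : (U_(i) *+ q == m)%MM -> i = j.
    move=> /eqP e; move: hjm; rewrite -e mulmnE mnm1E.
    by case: (i =P j) => // _; rewrite mul0n leqn0 => /eqP e0; move: q0; rewrite e0.
  rewrite (bigD1 j) //= big1 ?addr0; last first.
    move=> i hi; rewrite hU; case: eqP => [/eqP /hUk e|_]; last by rewrite subrr mulr0.
    by move: hi; rewrite e eqxx.
  rewrite hU subr0.
  case: (boolP (U_(j) *+ q == m)%MM) => [/eqP <-|hne]; first by rewrite mulr1 subrr.
  rewrite mulr0 subr0.
  apply: contraT => hfm; exfalso; move/negP: hne; apply.
  rewrite -mcoeff_msupp in hfm.
  have hdm := dhomog_mf hf hfm.
  have hmj_le : (m j <= mdeg m)%N by rewrite mdegE (bigD1 j) //= leq_addr.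
  apply/eqP/mnmP => i; rewrite mulmnE mnm1E.
  case: (j =P i) => [<-|/eqP hji].
    rewrite mul1n; apply/eqP; rewrite eqn_leq hjm /=.
    by apply: leq_trans hmj_le _; rewrite hdm.
  rewrite mul0n; apply/eqP; rewrite eq_sym -leqn0.
  have : (m j + m i <= mdeg m)%N.
    by rewrite mdegE (bigD1 j) //= (bigD1 i) 1?eq_sym //= addnA leq_addr.
  rewrite hdm => h; rewrite -(leq_add2l (m j)) addn0; apply: leq_trans h _.
  exact: leq_trans hdq hjm.
have hm := mlead_supp hf0; set m := mlead f in hm.
have hdm : mdeg m = d := dhomog_mf hf hm.
case: (boolP [exists j : 'I_n, m == (U_(j) *+ q)%MM]) => [/existsP [j /eqP em]|hno].
  have hcj : c j != 0 by rewrite /c -em -mcoeff_msupp.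
  have dq : d = q by rewrite -hdm em mdegMn mdeg1 mul1n.
  have := congr1 (mcoeff U_(j)) gz; rewrite gcoef mcoeff0.
  have -> : f@_U_(j) = 0.
    apply: (dhomog_nemf_coeff hf); apply/eqP => e.
    have e' : mdeg U_(j) = d := e; move: e'; rewrite mdeg1 dq => e1.
    by move: qn1; rewrite -e1 eqxx.
  rewrite (bigD1 j) //= big1 ?addr0; last first.
    by move=> i hi; rewrite Uk_neq_U // U_eq (negbTE hi) subrr mulr0.
  rewrite Uk_neq_U // eqxx /= sub0r sub0r mulrN1 opprK => /eqP.
  by rewrite (negbTE hcj).
have := congr1 (mcoeff m) gz; rewrite gcoef mcoeff0 big1 ?subr0.
  by move=> e; move: hm; rewrite mcoeff_msupp e eqxx.
move=> i _; case: (eqVneq (c i) 0) => [->|hci]; first by rewrite mul0r.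
have dq : d = q.
  have hs : (U_(i) *+ q)%MM \in msupp f by rewrite mcoeff_msupp.
  have e : mdeg (U_(i) *+ q)%MM = d := dhomog_mf hf hs.
  by rewrite -e mdegMn mdeg1 mul1n.
have h1 : (U_(i) *+ q == m)%MM = false.
  by apply/negP => /eqP e; move/negP: hno; apply; apply/existsP; exists i; rewrite -e.
have h2 : (U_(i) == m)%MM = false.
  apply/negP => /eqP e; move: hdm; rewrite -e mdeg1 dq => e1.
  by move: qn1; rewrite -e1 eqxx.
by rewrite h1 h2 subrr mulr0.
Qed.

Lemma pboolT (P : Prop) : P -> pbool P.
Proof. by rewrite /pbool; case: excluded_middle_informative. Qed.

Lemma pboolE (P : Prop) : pbool P -> P.
Proof. by rewrite /pbool; case: excluded_middle_informative. Qed.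

Lemma nb_le m r (f : 'I_r -> {mpoly F[m.+1]}) : (nb_common_zeros f <= q ^ m.+1)%N.
Proof.
rewrite /nb_common_zeros; apply: leq_trans (max_card _) _.
by rewrite card_ffun card_ord.
Qed.

Lemma e_max_ge m d r k : achievable F m d r k -> (k <= e_max F r d m)%N.
Proof.
move=> h; have hk : (k < (q ^ m.+1).+1)%N.
  by case: h => f [_ _ <-]; rewrite ltnS nb_le.
exact: (@leq_bigmax_cond _ _ (fun i : 'I_(q ^ m.+1).+1 => val i) (Ordinal hk) (pboolT h)).
Qed.

Lemma e_max_le m d r b :
  (forall k, achievable F m d r k -> (k <= b)%N) -> (e_max F r d m <= b)%N.
Proof.
move=> h; apply/bigmax_leqP => i /pboolE; exact: h.
Qed.


Lemma exists_family m d s : (s <= 'C(m + d, d))%N -> exists k, achievable F m d s k.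
Proof.
move=> hs.
pose b := [seq s2m t | t : d.-tuple 'I_m.+1 <- enum (basis m.+1 d)].
have hb : size b = 'C(m + d, d) by rewrite size_basis addnC.
have hi (i : 'I_s) : (i < size b)%N by rewrite hb; exact: leq_trans (ltn_ord i) hs.
pose f (i : 'I_s) := 'X_[nth 0%MM b i] : {mpoly F[m.+1]}.
exists (nb_common_zeros f), f; split=> //.
  by move=> i; rewrite /f (dhomogX _ mdeg) basis_cover; apply: mem_nth.
move=> c hc i; have := congr1 (mcoeff (nth 0%MM b i)) hc.
rewrite raddf_sum mcoeff0 (bigD1 i) //= mcoeffZ mcoeffX eqxx mulr1 big1 ?addr0 //.
move=> j hj; rewrite mcoeffZ mcoeffX nth_uniq ?uniq_basis //.
by rewrite (inj_eq val_inj) (negbTE hj) mulr0.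
Qed.


Lemma step m d r (f : 'I_r.+1 -> {mpoly F[m.+1]}) :
  (1 <= d <= q)%N -> homog_family d f -> lin_indep f ->
  exists g : 'I_r -> {mpoly F[m.+1]},
    [/\ homog_family d g, lin_indep g & (nb_common_zeros f < nb_common_zeros g)%N].
Proof.
move=> /andP [d1 dq] hf hl.
have f0nz : f ord0 != 0.
  apply/negP => /eqP h0.
  have hs : \sum_(i < r.+1) (i == ord0)%:R *: f i = 0.
    rewrite (bigD1 ord0) //= big1 => [|i /negbTE ->]; last by rewrite scale0r.
    by rewrite ?eqxx scale1r addr0.
  by have := hl _ hs ord0; rewrite eqxx => /eqP; rewrite oner_eq0.
have [x hx] := homog_nonvanish (hf ord0) dq f0nz.
have [i0 hi0] : exists i0, x i0 != 0.
  case: (boolP [exists i, x i != 0]) => [/existsP //|hn]; exfalso.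
  have ex0 : x =1 (fun i => 0 * x i).
    move=> i; move: hn; rewrite negb_exists => /forallP /(_ i).
    by rewrite negbK mul0r => /eqP.
  move: hx; rewrite (meval_eq _ ex0) (meval_scale _ _ (hf ord0)) expr0n eqn0Ngt d1 /=.
  by rewrite mul0r eqxx.
pose i1 := [arg min_(i < i0 | x i != 0) val i].
have [hx1 hmin] : x i1 != 0 /\ forall j, x j != 0 -> (i1 <= j)%N.
  by rewrite /i1; case: arg_minnP => // i hi hm; split.
pose Q := [ffun i => (x i1)^-1 * x i].
have Qnorm : proj_normalized Q.
  apply/existsP; exists i1; rewrite ffunE mulVf // eqxx /=.
  apply/forallP => j; apply/implyP => hj; rewrite ffunE.
  have /eqP -> : x j == 0 by apply: (contraTT _ hj) => h; rewrite -leqNgt; exact: hmin.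
  by rewrite mulr0.
have a_nz : (f ord0).@[Q] != 0.
  rewrite (meval_eq _ (v2 := fun i => (x i1)^-1 * x i)); last by move=> i; rewrite ffunE.
  by rewrite (meval_scale _ _ (hf ord0)) mulf_neq0 // expf_neq0 // invr_eq0.
set a := (f ord0).@[Q] in a_nz.
pose g (i : 'I_r) := f (lift ord0 i) - ((f (lift ord0 i)).@[Q] / a) *: f ord0.
exists g; split.
- by move=> i; rewrite /g rpredB ?rpredZ.
- move=> c hc i.
  pose c' (j : 'I_r.+1) := if unlift ord0 j is Some i then c i
     else - \sum_(i < r) c i * ((f (lift ord0 i)).@[Q] / a).
  have hs : \sum_(j < r.+1) c' j *: f j = 0.
    have e j : c' (lift ord0 j) = c j by rewrite /c' liftK.
    rewrite big_ord_recl (eq_bigr _ (fun j _ => congr1 (fun t => t *: _) (e j))).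
    rewrite /c' unlift_none.
    transitivity (\sum_(i < r) c i *: g i); last exact: hc.
    rewrite /g.
    rewrite [RHS](eq_bigr (fun i => c i *: f (lift ord0 i) - (c i * ((f (lift ord0 i)).@[Q] / a)) *: f ord0)); last first.
      by move=> j _; rewrite scalerBr scalerA.
    by rewrite sumrB -scaler_suml scaleNr addrC.
  by have := hl _ hs (lift ord0 i); rewrite /c' liftK.
- rewrite /nb_common_zeros.
  set Sf := [set _ | _]; set Sg := [set _ | _].
  have hsub : Q |: Sf \subset Sg.
    apply/subsetP => y; rewrite !inE => /orP [/eqP ->|/andP [hy /forallP hall]].
      rewrite Qnorm /=; apply/forallP => i; rewrite /g mevalB mevalZ -/a divfK //.
      by rewrite subrr.
    rewrite hy /=; apply/forallP => i.
    by rewrite /g mevalB mevalZ (eqP (hall _)) (eqP (hall ord0)) mulr0 subrr.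
  have hQ : Q \notin Sf.
    rewrite inE negb_and; apply/orP; right; rewrite negb_forall; apply/existsP.
    by exists ord0.
  by apply: leq_trans (subset_leq_card hsub); rewrite cardsU1 hQ.
Qed.


Lemma full_no_zero m d (f : 'I_('C(m + d, d)) -> {mpoly F[m.+1]}) :
  homog_family d f -> lin_indep f -> nb_common_zeros f = 0%N.
Proof.
move=> hf hl; apply/eqP; rewrite cards_eq0; apply/eqP/setP => x; rewrite !inE.
apply/negP => /andP [/existsP [i0 /andP [/eqP hx0 _]] /forallP hall].
pose V := dhomog m.+1 F d.
pose h i : V := DHomog (hf i).
pose X := [tuple h i | i < 'C(m + d, d)].
have hX (i : 'I_('C(m + d, d))) : val X`_i = f i by rewrite nth_mktuple.
have hfree : free X.
  apply/freeP => k hk i; apply: hl.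
  have -> : \sum_(i < 'C(m + d, d)) k i *: f i = val (\sum_(i < 'C(m + d, d)) k i *: X`_i).
    by rewrite linear_sum; apply: eq_bigr => j _; rewrite linearZ /= hX.
  by rewrite hk.
have hspan : <<X>>%VS = fullv.
  apply/eqP; rewrite eqEdim subvf dimvf /=.
  move: hfree; rewrite /free size_tuple => /eqP ->.
  by rewrite addnC.
pose u : {mpoly F[m.+1]} := 'X_[U_(i0) *+ d].
have e : mdeg (U_(i0) *+ d)%MM = d by rewrite mdegMn mdeg1 mul1n.
have hu : u \is d.-homog by rewrite (dhomogX _ mdeg); apply/eqP; exact: e.
pose v : V := DHomog hu.
have hv : v \in <<X>>%VS by rewrite hspan memvf.
have := congr1 (fun w : V => (val w).@[x]) (coord_span hv).
rewrite /= eval_Uk hx0 expr1n linear_sum raddf_sum big1 => [/eqP|i _].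
  by rewrite oner_eq0.
by rewrite linearZ /= mevalZ hX (eqP (hall i)) mulr0.
Qed.

End Claim.

Theorem corollary6p3 (F : finFieldType) (m d : nat) :
  (0 < m)%N -> (1 <= d <= #|F|)%N ->
  (forall r : nat, (1 <= r)%N -> (r < 'C(m + d, d))%N ->
     (e_max F r.+1 d m < e_max F r d m)%N)
  /\ e_max F 'C(m + d, d) d m = 0%N.
Proof.
move=> _ hd; split.
  move=> r _ hr.
  have [k0 hk0] := @exists_family F m d r.+1 hr.
  have hlt : forall k, achievable F m d r.+1 k -> (k < e_max F r d m)%N.
    move=> k [f [hf hl <-]]; have [g [hg hlg hlt]] := step hd hf hl.
    by apply: leq_trans hlt _; apply: e_max_ge; exists g.
  have hpos := hlt _ hk0.
  have h0 : (0 < e_max F r d m)%N := leq_ltn_trans (leq0n _) hpos.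
  rewrite -(prednK h0) ltnS; apply: e_max_le => k hk.
  by rewrite -ltnS prednK ?(hlt _ hk).
apply/eqP; rewrite -leqn0; apply: e_max_le => k [f [hf hl <-]].
by rewrite full_no_zero.
Qed.
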